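(* In the SLAR setting, if $(\delta_u,u)$ and $(\delta_v,v)$ are both Nash equilibria of the SLAR game, then $u=v$.
   Context: SLAR setting: $(x,y)$ is drawn from a distribution $\mathcal D$ on $\mathbb R^d\times\{-1,+1\}$, $x=(x_1,\dots,x_d)$ with finite second moments, such that (A1) for each $i$ there is a constant $\mu_i$ with $\mathbb E[x_i\mid y]=y\mu_i$ for $y\in\{-1,1\}$, and (A2) the coordinates $x_1,\dots,x_d$ are mutually independent conditionally on $y$. Fix $\lambda>0$ and a perturbation budget $\varepsilon>0$; $\mathcal B(\varepsilon)=\{a\in\mathbb R^d:\|a\|_\infty\le\varepsilon\}$. A perturbation function is a measurable map $\delta$ assigning to each $(x,y)$ a vector $\delta(x,y)\in\mathcal B(\varepsilon)$. For a perturbation function $\delta$ and $w\in\mathbb R^d$ let $U(\delta,w)=\mathbb E_{(x,y)\sim\mathcal D}[\max(0,1-yw^\top(x+\delta(x,y)))]+\frac{\lambda}{2}\|w\|_2^2$. SLAR game: the adversary chooses a perturbation function $\delta$, the defender chooses $w\in\mathbb R^d$; the adversary's payoff is $U(\delta,w)$ and the defender's is $-U(\delta,w)$. A pair $(\delta^*,w^* )$ is a (pure) Nash equilibrium if $\sup_\delta U(\delta,w^* )\le U(\delta^*,w^* )\le\inf_{w\in\mathbb R^d}U(\delta^*,w)$, the supremum over all perturbation functions. *)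

(* Defs.v *)
From HB Require Import structures.
From mathcomp Require Import all_boot all_order all_algebra.
From mathcomp Require Import all_classical all_reals all_analysis.
Set Implicit Arguments. Unset Strict Implicit. Unset Printing Implicit Defensive.
Import Order.TTheory GRing.Theory Num.Theory.
Import numFieldNormedType.Exports.
Local Open Scope classical_set_scope.
Local Open Scope ring_scope.

(* The label y in {-1,+1} is encoded by a boolean b, y = slar_label b. *)
Definition slar_space (R : realType) (d : nat) := (d.-tuple R * bool)%type.

Definition slar_label (R : realType) (b : bool) : R := if b then 1 else -1.

Definition slar_x (R : realType) (d : nat) (i : 'I_d) (z : slar_space R d) : R :=
  tnth z.1 i.

Definition slar_y (R : realType) (d : nat) (z : slar_space R d) : R :=
  slar_label R z.2.

Definition tdot (R : realType) (d : nat) (w x : d.-tuple R) : R :=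
  \sum_(i < d) tnth w i * tnth x i.
Definition tnorm2 (R : realType) (d : nat) (w : d.-tuple R) : R :=
  \sum_(i < d) tnth w i ^+ 2.
Definition tadd (R : realType) (d : nat) (x a : d.-tuple R) : d.-tuple R :=
  [tuple tnth x i + tnth a i | i < d].

Definition finite_second_moments (R : realType) (d : nat)
    (D : probability (slar_space R d) R) : Prop :=
  forall i : 'I_d, D.-integrable setT (fun z => ((slar_x i z) ^+ 2)%:E).

(* (A1): E[x_i | y] = y mu_i.  Since y takes the two values -1, +1, the
   conditional expectation given y is characterised by its defining property
   on the generating events {y = b}: int_{y = b} x_i dD = (y-value) mu_i D(y = b). *)
Definition slar_A1 (R : realType) (d : nat)
    (D : probability (slar_space R d) R) : Prop :=
  forall i : 'I_d, exists mu : R, forall b : bool,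
    (\int[D]_(z in [set z : slar_space R d | z.2 = b]) (slar_x i z)%:E
      = (slar_label R b * mu)%:E * D [set z : slar_space R d | z.2 = b])%E.

(* (A2): x_1,...,x_d mutually independent conditionally on y:
   for each label value b of positive probability and all Borel sets A_i,
   D(x_i in A_i for all i | y = b) = prod_i D(x_i in A_i | y = b).
   (Sub-families are obtained by taking A_i = R.) *)
Definition slar_A2 (R : realType) (d : nat)
    (D : probability (slar_space R d) R) : Prop :=
  forall (b : bool) (A : 'I_d -> set R),
    (forall i, measurable (A i)) ->
    let pb := fine (D [set z : slar_space R d | z.2 = b]) in
    0 < pb ->
    fine (D [set z : slar_space R d | z.2 = b /\ forall i, A i (slar_x i z)]) / pb
    = \prod_(i < d)
        (fine (D [set z : slar_space R d | z.2 = b /\ A i (slar_x i z)]) / pb).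

Definition perturbation (R : realType) (d : nat) (eps : R)
    (delta : slar_space R d -> d.-tuple R) : Prop :=
  measurable_fun setT delta /\
  forall (z : slar_space R d) (i : 'I_d), `|tnth (delta z) i| <= eps.

Definition slar_hinge (R : realType) (d : nat)
    (delta : slar_space R d -> d.-tuple R) (w : d.-tuple R)
    (z : slar_space R d) : R :=
  Num.max 0 (1 - slar_y z * tdot w (tadd z.1 (delta z))).

Definition slar_U (R : realType) (d : nat) (D : probability (slar_space R d) R)
    (lam : R) (delta : slar_space R d -> d.-tuple R) (w : d.-tuple R) : \bar R :=
  (\int[D]_z (slar_hinge delta w z)%:E + (lam / 2 * tnorm2 w)%:E)%E.

Definition slar_nash (R : realType) (d : nat) (D : probability (slar_space R d) R)
    (lam eps : R) (delta0 : slar_space R d -> d.-tuple R) (w0 : d.-tuple R) : Prop :=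
  perturbation eps delta0 /\
  (ereal_sup [set slar_U D lam delta w0 | delta in perturbation eps]
     <= slar_U D lam delta0 w0)%E /\
  (slar_U D lam delta0 w0 <= ereal_inf [set slar_U D lam delta0 w | w in setT])%E.

(* Main.v *)
Require Import Defs.
From HB Require Import structures.
From mathcomp Require Import all_boot all_order all_algebra.
From mathcomp Require Import all_classical all_reals all_analysis.
From mathcomp Require Import measurable_realfun lebesgue_integral.
From mathcomp Require Import ring lra.
Import Order.TTheory GRing.Theory Num.Theory.
Local Open Scope ring_scope.

Section H.
Variables (R : realType) (d : nat) (D : probability (slar_space R d) R) (lam eps : R).

Lemma nash_le_inf delta0 w0 w : slar_nash D lam eps delta0 w0 ->
  (slar_U D lam delta0 w0 <= slar_U D lam delta0 w)%E.
Proof.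
case=> _ [_ h]; apply: (le_trans h); apply: ereal_inf_lbound; by exists w.
Qed.

Lemma nash_sup_le delta0 w0 delta : slar_nash D lam eps delta0 w0 ->
  perturbation eps delta ->
  (slar_U D lam delta w0 <= slar_U D lam delta0 w0)%E.
Proof.
case=> _ [h _] pd; apply: le_trans h; apply: ereal_sup_ubound; by exists delta.
Qed.

Lemma hinge0 (delta : slar_space R d -> d.-tuple R) z : slar_hinge delta [tuple of nseq d 0] z = 1.
Proof.
rewrite /slar_hinge /tdot big1 ?mulr0 ?subr0 ?max_r ?ler01 // => i _.
by rewrite tnth_nseq mul0r.
Qed.

Lemma U0 (delta : slar_space R d -> d.-tuple R) : slar_U D lam delta [tuple of nseq d 0] = 1%E.
Proof.
rewrite /slar_U.
under eq_integral do rewrite hinge0.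
rewrite integral_cst //= probability_setT /tnorm2 big1 ?mulr0 ?adde0 ?mule1 //.
by move=> i _; rewrite tnth_nseq expr0n.
Qed.

Definition tmid (u v : d.-tuple R) : d.-tuple R :=
  [tuple (tnth u i + tnth v i) / 2 | i < d].

Lemma tdot_mid u v x : 2 * tdot (tmid u v) x = tdot u x + tdot v x.
Proof.
rewrite /tdot mulr_sumr -big_split; apply: eq_bigr => i _.
rewrite /tmid tnth_mktuple; rewrite /=; field; by rewrite ?pnatr_eq0.
Qed.

Lemma tnorm2_mid u v : 4 * tnorm2 (tmid u v) =
  2 * (tnorm2 u + tnorm2 v) - \sum_(i < d) (tnth u i - tnth v i) ^+ 2.
Proof.
rewrite /tnorm2 mulr_sumr -big_split mulr_sumr -sumrB; apply: eq_bigr => i _.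
rewrite /tmid tnth_mktuple /=; field; by rewrite ?pnatr_eq0.
Qed.

Lemma max_conv (p q r : R) : 2 * p = q + r ->
  2 * Num.max 0 p <= Num.max 0 q + Num.max 0 r.
Proof.
move=> e.
have hq : 0 <= Num.max 0 q by rewrite le_max lexx.
have hq' : q <= Num.max 0 q by rewrite le_max lexx orbT.
have hr : 0 <= Num.max 0 r by rewrite le_max lexx.
have hr' : r <= Num.max 0 r by rewrite le_max lexx orbT.
have [h|h] := lerP 0 p.
  lra.
lra.
Qed.

Lemma hinge_mid (delta : slar_space R d -> d.-tuple R) u v z :
  2 * slar_hinge delta (tmid u v) z <= slar_hinge delta u z + slar_hinge delta v z.
Proof.
rewrite /slar_hinge; apply: max_conv.
have := tdot_mid u v (tadd z.1 (delta z)).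
set a := tdot _ _; set b := tdot _ _; set c := tdot _ _ => e.
by rewrite mulrBr mulr1 mulrCA e; lra.
Qed.

End H.
Lemma hinge_meas (R : realType) (d : nat) (delta : slar_space R d -> d.-tuple R)
  (w : d.-tuple R) : measurable_fun setT delta ->
  measurable_fun [set: slar_space R d] (EFin \o slar_hinge delta w).
Proof.
move=> md.
apply/measurable_EFinP.
rewrite /slar_hinge.
apply: measurable_maxr; first exact: measurable_cst.
apply: measurable_funB; first exact: measurable_cst.
apply: measurable_funM.
  rewrite /slar_y /slar_label.
  apply: measurable_fun_ifT; [exact: measurable_snd|exact: measurable_cst|exact: measurable_cst].
rewrite /tdot.
apply: measurable_sum => i.
apply: measurable_funM; first exact: measurable_cst.
have -> : (fun x : slar_space R d => tnth (tadd x.1 (delta x)) i) =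
  (fun x => tnth x.1 i + tnth (delta x) i).
  by apply: funext => x; rewrite /tadd tnth_mktuple.
apply: measurable_funD.
  apply: (measurableT_comp (measurable_tnth i)); exact: measurable_fst.
by apply: (measurableT_comp (measurable_tnth i)).
Qed.

Lemma fin_of_le (R : realType) (x : \bar R) (a b : R) :
  (0 <= x)%E -> (x + a%:E <= b%:E)%E -> exists A : R, x = A%:E.
Proof. by case: x => [r| |] //= _ _; exists r. Qed.

Lemma fin_of_le2 (R : realType) (x : \bar R) (b : R) :
  (0 <= x)%E -> (2%:E * x <= b%:E)%E -> exists A : R, x = A%:E.
Proof. by case: x => [r| |] //= _; [exists r| rewrite mulry gtr0_sg // mul1e]. Qed.

Arguments nash_le_inf {R d D lam eps delta0 w0} w _.
Arguments nash_sup_le {R d D lam eps delta0 w0 delta} _ _.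
Arguments hinge_meas {R d delta} w _.
Arguments tmid {R d} u v.
Arguments tdot_mid {R d} u v x.
Arguments tnorm2_mid {R d} u v.
Arguments hinge_mid {R d} delta u v z.
Arguments U0 {R d D lam delta}.
Theorem mainTheorem15 (R : realType) (d : nat)
    (D : probability (slar_space R d) R) (lam eps : R)
    (hlam : 0 < lam) (heps : 0 < eps)
    (hmom : finite_second_moments D) (hA1 : slar_A1 D) (hA2 : slar_A2 D)
    (delta_u delta_v : slar_space R d -> d.-tuple R) (u v : d.-tuple R) :
  slar_nash D lam eps delta_u u -> slar_nash D lam eps delta_v v -> u = v.
Proof.
move=> Nu Nv.
have pu := Nu.1.
have pv := Nv.1.
have e1 := nash_le_inf (v) Nu.
have e2 := nash_sup_le Nv pu.
have e3 := nash_le_inf (u) Nv.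
have e4 := nash_sup_le Nu pv.
have Euv : slar_U D lam delta_u v = slar_U D lam delta_u u.
  apply/le_anti; rewrite e1 andbT.
  exact: (le_trans e2 (le_trans e3 e4)).
have b1 := nash_le_inf ([tuple of nseq d 0]) Nu.
rewrite U0 in b1.
have mu := hinge_meas u pu.1.
have mv := hinge_meas v pu.1.
have mm := hinge_meas (tmid u v) pu.1.
have h0 : forall w z, (0 <= (slar_hinge delta_u w z)%:E)%E.
  by move=> w z; rewrite lee_fin le_max lexx.
have [A hA] : exists A : R, (\int[D]_z (slar_hinge delta_u u z)%:E)%E = A%:E.
  by apply: (@fin_of_le R _ (lam / 2 * tnorm2 u) 1 _ b1); apply: integral_ge0.
have [B hB] : exists A : R, (\int[D]_z (slar_hinge delta_u v z)%:E)%E = A%:E.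
  by apply: (@fin_of_le R _ (lam / 2 * tnorm2 v) 1); [apply: integral_ge0|rewrite -/(slar_U D lam delta_u v) Euv].
have i2 : (2%:E * \int[D]_z (slar_hinge delta_u (tmid u v) z)%:E <= A%:E + B%:E)%E.
  rewrite -ge0_integralZl_EFin //.
  have -> : (A%:E + B%:E = \int[D]_z ((slar_hinge delta_u u z)%:E + (slar_hinge delta_u v z)%:E))%E.
    by rewrite (ge0_integralD D measurableT (fun z _ => h0 u z) mu (fun z _ => h0 v z) mv) hA hB.
  apply: ge0_le_integral => //.
  - by move=> z _; rewrite -EFinM lee_fin mulr_ge0 // le_max lexx.
  - by apply: measurable_funeM.
  - by apply: emeasurable_funD.
  - by move=> z _; rewrite -EFinM -EFinD lee_fin hinge_mid.
have [C hC] : exists A : R, (\int[D]_z (slar_hinge delta_u (tmid u v) z)%:E)%E = A%:E.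
  rewrite -EFinD in i2. by apply: (@fin_of_le2 _ _ _ _ i2); apply: integral_ge0 => z _; exact: h0.
rewrite hC -EFinM -EFinD lee_fin in i2.
have e5 := nash_le_inf (tmid u v) Nu.
move: e5 Euv; rewrite /slar_U hA hB hC -!EFinD lee_fin => e5 [Euv].
have hn := tnorm2_mid u v.
set S := \sum_(i < d) (tnth u i - tnth v i) ^+ 2 in hn.
have S0 : 0 <= S by apply: sumr_ge0 => i _; exact: sqr_ge0.
have kS : lam * S <= 0.
  have : lam * (4 * tnorm2 (tmid u v)) = lam * (2 * (tnorm2 u + tnorm2 v) - S) by rewrite hn.
  lra.
have S00 : S = 0.
  apply/le_anti; rewrite S0 andbT.
  by rewrite -(pmulr_rle0 _ hlam).
apply: eq_from_tnth => i.
have := S00; rewrite /S => /eqP; rewrite psumr_eq0; last by move=> j _; exact: sqr_ge0.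
move=> /allP /(_ i (mem_index_enum _)) /=.
by rewrite sqrf_eq0 subr_eq0 => /eqP.
Qed.
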